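(* Let $G$ be a finite group. Then $G$ has at least $d(|G|)$ cyclic subgroups, and $G$ has exactly $d(|G|)$ cyclic subgroups if and only if $G$ is cyclic.
   Context: For a positive integer $n$, $d(n)$ denotes the number of positive divisors of $n$. *)

(* Defs.v *)
From mathcomp Require Import all_boot all_fingroup all_solvable.
Set Implicit Arguments. Unset Strict Implicit. Unset Printing Implicit Defensive.

Definition ndivisors (n : nat) : nat := size (divisors n).

Definition ncyclic_subgroups (gT : finGroupType) (G : {group gT}) : nat :=
  #|[set H : {group gT} | (H \subset G) && cyclic H]|.

(* Main.v *)
Require Import Defs.
From mathcomp Require Import all_boot all_fingroup all_solvable.
From mathcomp Require Import all_order all_algebra.
From Stdlib Require Import Lia.
From mathcomp Require Import zify ring lra.
Set Implicit Arguments. Unset Strict Implicit. Unset Printing Implicit Defensive.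
Import Order.TTheory GRing.Theory Num.Theory.

Lemma divisors_split p i m : prime p -> 0 < m -> ~~ (p %| m) ->
  perm_eq (divisors (p ^ i * m)) [seq p ^ j * d | j <- iota 0 i.+1, d <- divisors m].
Proof.
move=> pp m0 npm.
have p0 : 0 < p by apply: prime_gt0.
have cpm : coprime p m by rewrite prime_coprime.
apply: uniq_perm; first exact: divisors_uniq.
  apply: allpairs_uniq; [exact: iota_uniq | exact: divisors_uniq|].
  move=> [a b] [c e] H1 H2 /= Heq.
  have Hb : b \in divisors m by case/allpairsP: H1 => [[x y] [/= _ Hy [_ ->]]].
  have He : e \in divisors m by case/allpairsP: H2 => [[x y] [/= _ Hy [_ ->]]].
  have b0 : 0 < b by move: Hb; rewrite -dvdn_divisors //; apply: dvdn_gt0.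
  have e0 : 0 < e by move: He; rewrite -dvdn_divisors //; apply: dvdn_gt0.
  have cb : coprime p b.
    by move: Hb; rewrite -dvdn_divisors // => /(coprime_dvdr) ->.
  have ce : coprime p e.
    by move: He; rewrite -dvdn_divisors // => /(coprime_dvdr) ->.
  have := congr1 (logn p) Heq.
  rewrite !lognM ?expn_gt0 ?p0 // !pfactorK // !logn_coprime // !addn0 => Hac.
  subst c; congr (_, _).
  by move/eqP: Heq; rewrite eqn_mul2l expn_eq0 eqn0Ngt p0 /= => /eqP.
move=> d; rewrite -dvdn_divisors ?muln_gt0 ?expn_gt0 ?p0 //.
apply/idP/allpairsP => [dv | [[j d'] [Hj Hd ->]]]; last first.
  move: Hj Hd; rewrite mem_iota add0n ltnS -dvdn_divisors //= => Hj Hd.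
  by apply: dvdn_mul => //; rewrite dvdn_Pexp2l ?prime_gt1.
have d0 : 0 < d by apply: dvdn_gt0 dv; rewrite muln_gt0 expn_gt0 p0.
have [d' cd' Ed] := pfactor_coprime pp d0.
exists (logn p d, d'); split.
- rewrite mem_iota leq0n add0n ltnS /= -(dvdn_Pexp2l _ _ (prime_gt1 pp)).
  have : p ^ logn p d %| p ^ i * m by apply: dvdn_trans dv; apply: pfactor_dvdnn.
  by rewrite Gauss_dvdl // coprimeXl.
- rewrite /= -dvdn_divisors //.
  have : d' %| p ^ i * m by apply: dvdn_trans dv; rewrite [X in _ %| X]Ed dvdn_mulr.
  by rewrite Gauss_dvdr // coprime_sym coprimeXl.
- by rewrite /= mulnC -Ed.
Qed.
Lemma tot_pow_succ p i : prime p -> totient (p ^ i.+1) = (p.-1 * p ^ i)%N.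
Proof. by move=> pp; rewrite totient_pfactor. Qed.

Lemma sum_tot_pow p i : prime p -> (\sum_(j < i.+1) totient (p ^ j) = p ^ i)%N.
Proof.
move=> pp; have p1 := prime_gt1 pp.
elim: i => [|i IH]; first by rewrite big_ord_recr big_ord0 expn0.
rewrite big_ord_recr /= IH tot_pow_succ // expnS.
have : (0 < p)%N by lia. case: p {pp IH} p1 => // p _ _ /=.
Qed.

Lemma tot_pow_le p i : prime p -> (totient (p ^ i) <= totient (p ^ i.+1))%N /\
  ((0 < i)%N || (2 < p)%N -> (totient (p ^ i) < totient (p ^ i.+1))%N).
Proof.
move=> pp; have p1 := prime_gt1 pp.
case: i => [|i].
  rewrite expn0 tot_pow_succ // expn0 muln1 (_ : totient 1 = 1%N) //; split; [lia|].
  rewrite /=; lia.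
rewrite !tot_pow_succ // expnS.
have := expn_gt0 p i; rewrite (ltnW p1) /= => h.
move: h; move: (p ^ i) => x h. have hp : (p.-1 = p - 1)%N by lia. rewrite hp. split=> [|_]; [rewrite leq_mul2l leq_pmull ?orbT //; lia | rewrite ltn_mul2l ltn_Pmull // ?h; lia].
Qed.




Section Arith.
Local Open Scope ring_scope.

Section SBP.
Variable p : nat.
Hypothesis pp : prime p.
Definition ph j : rat := (totient (p ^ j))%:R.
Definition gw k i : rat := (ph i)^-1 - (if (i < k)%N then (ph i.+1)^-1 else 0).

Lemma ph_gt0 j : 0 < ph j.
Proof. by rewrite /ph ltr0n totient_gt0 expn_gt0 prime_gt0. Qed.

Lemma sbp (x : nat -> rat) k :
  \sum_(j < k.+1) x j = \sum_(i < k.+1) gw k i * \sum_(j < i.+1) x j * ph j.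
Proof.
elim: k => [|k IH].
  rewrite !big_ord_recr !big_ord0 /= /gw /= !add0r subr0.
  have := ph_gt0 0; move: (ph 0) => q q0; field; lra.
rewrite big_ord_recr /= IH [RHS]big_ord_recr /=.
rewrite [X in _ = X + _](_ : _ = \sum_(i < k.+1) gw k i * (\sum_(j < i.+1) x j * ph j)
   - (ph k.+1)^-1 * \sum_(j < k.+1) x j * ph j); last first.
  rewrite [in RHS]big_ord_recr /= [in LHS]big_ord_recr /=.
  rewrite (eq_bigr (fun i : 'I_k => gw k i * \sum_(j < i.+1) x j * ph j)); last first.
    by move=> i _; rewrite /gw ltnS (ltnW (ltn_ord i)) (ltn_ord i).
  rewrite /gw ltnn ltnSn subr0; ring.
rewrite /gw ltnn subr0 [X in _ = _ + _ * X]big_ord_recr /=.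
have := ph_gt0 k.+1; move: (ph k.+1) => q q0; field; lra.
Qed.
End SBP.
Arguments ph : clear implicits.

Lemma sum_div_split (F : nat -> rat) p i m : prime p -> (0 < m)%N -> ~~ (p %| m)%N ->
  \sum_(d <- divisors (p ^ i * m)%N) F d = \sum_(j < i.+1) \sum_(d <- divisors m) F (p ^ j * d)%N.
Proof.
move=> pp m0 npm; rewrite (perm_big _ (divisors_split i pp m0 npm)).
have -> : iota 0 i.+1 = index_iota 0 i.+1 by rewrite /index_iota subn0.
by rewrite big_allpairs_dep big_mkord.
Qed.


Lemma gw_ge0 p k i : prime p -> (i <= k)%N -> 0 <= gw p k i.
Proof.
move=> pp ik; rewrite /gw; case: ifP => _; last by rewrite subr0 invr_ge0 ltW ?ph_gt0.
rewrite subr_ge0 lef_pV2 ?posrE ?ph_gt0 // /ph ler_nat.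
by case: (tot_pow_le i pp).
Qed.

Lemma gw_gt0 p k i : prime p -> (i <= k)%N -> [|| i == k, (0 < i)%N | (2 < p)%N] -> 0 < gw p k i.
Proof.
move=> pp ik h; rewrite /gw; case: ifP => ltik; last by rewrite subr0 invr_gt0 ?ph_gt0.
rewrite subr_gt0 ltf_pV2 ?posrE ?ph_gt0 // /ph ltr_nat.
case: (tot_pow_le i pp) => _; apply; move: h; rewrite ltn_neqAle in ltik.
by case/andP: ltik => /negbTE -> _.
Qed.



Definition Sd (a : nat -> rat) e := \sum_(d <- divisors e) a d * (totient d)%:R.
Definition Td (a : nat -> rat) n := \sum_(d <- divisors n) a d.

Lemma key n : (0 < n)%N -> forall a, (forall e, (e %| n)%N -> e%:R <= Sd a e) ->
  (size (divisors n))%:R <= Td a n /\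
  (forall e, (e %| n)%N -> (odd n || ~~ odd e) -> e%:R < Sd a e ->
     (size (divisors n))%:R < Td a n).
Proof.
elim/ltn_ind: n => n IH n0 a Ha.
case: (ltngtP n 1) => [|n1|n1]; first by lia.
2:{ subst n; have Ha1 := Ha 1%N (dvdnn 1).
    rewrite /Sd /Td (_ : divisors 1 = [:: 1%N]) // !big_seq1 /= in Ha1 *.
    have t1 : totient 1 = 1%N by []. rewrite t1 mulr1 in Ha1; split => // e; rewrite dvdn1 => /eqP -> _.
    by rewrite /Sd (_ : divisors 1 = [:: 1%N]) // big_seq1 t1 mulr1. }
set p := pdiv n; have pp : prime p := pdiv_prime n1.
have [m cpm En] := pfactor_coprime pp n0.
set k := logn p n in En.
have p1 := prime_gt1 pp.
have k0 : (0 < k)%N by rewrite logn_gt0 mem_primes pp n0 pdiv_dvd.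
have m0 : (0 < m)%N by move: n0; rewrite En muln_gt0 => /andP[].
have npm : ~~ (p %| m)%N by rewrite -prime_coprime.
have pk1 : (1 < p ^ k)%N by rewrite -(expn0 p) ltn_exp2l.
have mn : (m < n)%N by rewrite En ltn_Pmulr.
have modd : odd m.
  apply/negP => /negP; rewrite -dvdn2 => m2.
  have : (p <= 2)%N by apply: pdiv_min_dvd => //; rewrite En dvdn_mulr.
  have : (1 < p)%N by []. move=> h1 h2; have p2 : p = 2%N by lia.
  by move: npm; rewrite p2 m2.
have En' : n = (p ^ k * m)%N by rewrite En mulnC.
pose ap i d' := (\sum_(j < i.+1) a (p ^ j * d')%N * ph p j) / (p ^ i)%:R.
have pi0 i : 0 < (p ^ i)%:R :> rat by rewrite ltr0n expn_gt0 prime_gt0.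
have Sap i e' : (e' %| m)%N -> Sd (ap i) e' = Sd a (p ^ i * e')%N / (p ^ i)%:R.
  move=> de'.
  have e'0 : (0 < e')%N by apply: dvdn_gt0 de'.
  have npe' : ~~ (p %| e')%N by apply: contra npm => /dvdn_trans; apply.
  rewrite /Sd (sum_div_split _ _ pp e'0 npe') mulr_suml.
  rewrite /ap (eq_bigr (fun d' => \sum_(j < i.+1) a (p ^ j * d')%N * ph p j / (p ^ i)%:R * (totient d')%:R)); last first.
    by move=> d' _; rewrite !mulr_suml.
  rewrite exchange_big /=; apply: eq_bigr => j _; rewrite mulr_suml; apply: eq_big_seq => d' Hd'.
  have cd' : coprime (p ^ j) d'.
    rewrite coprimeXl // prime_coprime //; apply: contra npe' => /dvdn_trans; apply.
    by move: Hd'; rewrite -dvdn_divisors.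
  by rewrite totient_coprime // natrM /ph; ring.
have IHap i : (i <= k)%N -> (size (divisors m))%:R <= Td (ap i) m /\
  (forall e, (e %| m)%N -> e%:R < Sd (ap i) e -> (size (divisors m))%:R < Td (ap i) m).
  move=> ik.
  have Hh : forall e', (e' %| m)%N -> e'%:R <= Sd (ap i) e'.
    move=> e' de'; rewrite Sap // ler_pdivlMr // -natrM mulnC; apply: Ha.
    by rewrite En' dvdn_mul // dvdn_Pexp2l.
  have [H1 H2] := IH m mn m0 (ap i) Hh.
  split=> // e de; apply: H2 => //; by rewrite modd.
have sz : size (divisors n) = (k.+1 * size (divisors m))%N.
  by rewrite En' (perm_size (divisors_split k pp m0 npm)) size_allpairs size_iota.
have gsum : \sum_(i < k.+1) gw p k i * (p ^ i)%:R = k.+1%:R.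
  have := sbp pp (fun _ => 1) k; rewrite sumr_const card_ord => ->.
  apply: eq_bigr => i _; congr (_ * _).
  by rewrite /ph -(sum_tot_pow i pp) natr_sum; apply: eq_bigr => j _; rewrite mul1r.
have Tn : Td a n = \sum_(i < k.+1) gw p k i * (p ^ i)%:R * Td (ap i) m.
  rewrite /Td En' sum_div_split // exchange_big /=.
  rewrite (eq_bigr (fun d' => \sum_(i < k.+1) gw p k i * \sum_(j < i.+1) a (p ^ j * d')%N * ph p j)); last first.
    by move=> d' _; rewrite (sbp pp (fun j => a (p ^ j * d')%N)).
  rewrite exchange_big /=; apply: eq_bigr => i _.
  rewrite mulr_sumr; apply: eq_bigr => d' _; rewrite /ap.
  have := pi0 i; move: ((p ^ i)%:R : rat) => q q0.
  by rewrite -mulrA [q * _]mulrC divfK // gt_eqF.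
have diff : Td a n - (size (divisors n))%:R =
    \sum_(i < k.+1) gw p k i * (p ^ i)%:R * (Td (ap i) m - (size (divisors m))%:R).
  rewrite Tn sz natrM -gsum mulr_suml -sumrB; apply: eq_bigr => i _; ring.
split.
  suff : 0 <= Td a n - (size (divisors n))%:R by rewrite subr_ge0.
  rewrite diff; apply: sumr_ge0 => i _.
  have ik : (i <= k)%N by rewrite -ltnS.
  apply: mulr_ge0; first by apply: mulr_ge0; [exact: gw_ge0 | exact: ltW].
  by rewrite subr_ge0; case: (IHap i ik).
move=> e de adm lte.
have : e \in divisors (p ^ k * m)%N by rewrite -En' -dvdn_divisors.
rewrite (perm_mem (divisors_split k pp m0 npm)).
case/allpairsP => [[i e'] [Hi He' Ee]].
move: Hi He'; rewrite mem_iota leq0n add0n ltnS /= -dvdn_divisors // => ik de'.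
rewrite /= in Ee.
suff : 0 < Td a n - (size (divisors n))%:R by rewrite subr_gt0.
rewrite diff (bigD1 (Ordinal (ik : (i < k.+1)%N))) //=.
apply: ltr_pwDl.
  apply: mulr_gt0; first apply: mulr_gt0.
  - apply: gw_gt0 => //.
    case: (ltngtP 2 p) => [_ | | p2]; first by rewrite !orbT.
      by move=> h; lia.
    have n2 : ~~ odd n by rewrite -dvdn2 p2 pdiv_dvd.
    move: adm; rewrite (negbTE n2) /= Ee => oe.
    case: i {ik} oe Ee => [|i]; last by move=> _ _; rewrite ltn0Sn orbT.
    move=> oe _; exfalso; move: oe.
    have -> : (p ^ 0 * e')%N = e' by rewrite expn0 mul1n.
    by rewrite (dvdn_odd de' modd).
  - exact: pi0.
  rewrite subr_gt0; case: (IHap i ik) => _; apply; first exact: de'.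
  by rewrite Sap // ltr_pdivlMr // -natrM mulnC -Ee.
apply: sumr_ge0 => j _.
have jk : (j <= k)%N by rewrite -ltnS.
apply: mulr_ge0; first by apply: mulr_ge0; [exact: gw_ge0 | exact: ltW].
by rewrite subr_ge0; case: (IHap j jk).
Qed.

End Arith.

Section Grp.
Variables (gT : finGroupType) (G : {group gT}).
Local Open Scope group_scope.

Definition CS := [set H : {group gT} | (H \subset G) && cyclic H].

Lemma LdivE e : #|'Ldiv_e(G)| = (\sum_(H in CS) (#|H| %| e) * totient #|H|)%N.
Proof.
rewrite -sum1_card (partition_big (fun x => <[x]>%G) (mem CS)) /=; last first.
  by move=> x; rewrite !inE cycle_cyclic cycle_subG andbT => /andP[].
apply: eq_bigr => H; rewrite inE => /andP[sHG cH].
have [a Ha] := cyclicP cH.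
rewrite sum1dep_card.
case: (boolP (#|H| %| e)) => dHe; rewrite ?mul1n ?mul0n.
  rewrite Ha totient_gen; apply: eq_card => x; rewrite !inE /generator -val_eqE /= Ha.
  apply/idP/idP => [/andP[_ /eqP ->] // | /eqP Eax].
  rewrite eq_sym -Eax eqxx andbT; apply/andP; split; first by rewrite -cycle_subG -Eax -Ha.
  by rewrite eq_sym -order_dvdn /order -Eax -Ha.
apply: eq_card0 => x; rewrite !inE -val_eqE /=.
apply/negP => /andP[/andP[_ xe] /eqP Ex]; move: dHe; rewrite -Ex -/(order x) order_dvdn.
by rewrite xe.
Qed.

Definition cnt d := #|[set H in CS | #|H| == d]|.

Lemma sum_cnt (f : nat -> nat) s : uniq s ->
  (\sum_(d <- s) cnt d * f d = \sum_(H in CS) (#|H| \in s) * f #|H|)%N.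
Proof.
move=> us.
rewrite (eq_bigr (fun d => \sum_(H in CS) (#|H| == d) * f d)%N); last first.
  move=> d _; rewrite /cnt -sum1dep_card big_mkcondr /= big_distrl /=.
  by apply: eq_bigr => H _; case: (_ == _); rewrite ?mul1n ?mul0n.
rewrite exchange_big /=; apply: eq_bigr => H _.
rewrite (eq_bigr (fun d => (#|H| == d) * f #|H|)%N); last first.
  by move=> d _; case: eqP => [->|]; rewrite ?mul1n ?mul0n.
rewrite -big_distrl /= -count_uniq_mem //; congr (_ * _)%N.
rewrite -sum1_count [RHS]big_mkcond /=; apply: eq_bigr => d _.
by rewrite eq_sym; case: (_ == _).
Qed.

Lemma cycle_Ldiv x : x \in G -> <[x]> \subset 'Ldiv_#[x](G).
Proof.
move=> Gx; apply/subsetP => w wx; rewrite !inE.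
have -> : w \in G by move: wx; apply/subsetP; rewrite cycle_subG.
by rewrite -order_dvdn order_dvdG.
Qed.

Lemma two x y : x \in G -> y \in G -> #[x] = #[y] -> <[x]> != <[y]> ->
  #[x] < #|'Ldiv_#[x](G)|.
Proof.
move=> Gx Gy oxy neq.
have : ~~ (<[y]> \subset <[x]>).
  apply: contra neq => sub; rewrite eq_sym eqEcard sub /=.
  by rewrite -/(order y) -/(order x) oxy.
case/subsetPn => z zy nzx.
have sub : z |: <[x]> \subset 'Ldiv_#[x](G).
  rewrite subUset cycle_Ldiv // andbT sub1set.
  by move: zy; rewrite oxy; apply/subsetP; apply: cycle_Ldiv.
by apply: leq_trans (subset_leq_card sub); rewrite cardsU1 nzx.
Qed.

Lemma commute_of_conj (t g : gT) : t ^ g = t -> commute t g.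
Proof.
rewrite conjgE => h; rewrite /commute.
by rewrite -{2}h mulKVg.
Qed.

Lemma witness x y : x \in G -> y \in G -> #[x] = #[y] -> <[x]> != <[y]> ->
  exists e, [/\ e %| #|G|, odd #|G| || ~~ odd e & e < #|'Ldiv_e(G)|].
Proof.
move=> Gx Gy oxy neq.
have dxG := order_dvdG Gx.
case: (boolP (odd #|G| || ~~ odd #[x])) => adm.
  by exists #[x]; split => //; apply: (two Gx Gy oxy neq).
move: adm; rewrite negb_or negbK => /andP[evG oddx].
have d2 : 2 %| #|G| by rewrite dvdn2.
case: (ltnP 2 #|'Ldiv_2(G)|) => [lt2 | le2].
  by exists 2; split => //; rewrite orbT.
have [t Gt ot] := Cauchy (isT : prime 2) d2.
have t1 : t != 1 by apply/eqP => E; move: ot; rewrite E order1.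
have tL : t \in 'Ldiv_2(G) by rewrite !inE Gt -order_dvdn ot.
have L2 : 'Ldiv_2(G) = [set 1; t].
  apply/eqP; rewrite eq_sym eqEcard cards2 eq_sym t1 le2 andbT.
  by rewrite subUset !sub1set tL !inE group1 expg1n eqxx.
have ct g : g \in G -> commute t g.
  move=> Gg; apply: commute_of_conj.
  have : t ^ g \in 'Ldiv_2(G).
    by rewrite !inE groupJ //= -conjXg conjg_eq1 -order_dvdn ot.
  by rewrite L2 !inE conjg_eq1 (negbTE t1) /= => /eqP.
have cop : coprime #[x] #[t] by rewrite ot coprimen2.
have cop' : coprime #[y] #[t] by rewrite ot coprimen2 -oxy.
have neq' : <[x * t]> != <[y * t]>.
  apply: contra neq => /eqP E.
  have cyc : cyclic <[y * t]>%G by apply: cycle_cyclic.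
  have sx : <[x]>%G \subset <[y * t]>%G.
    by rewrite /= -E (cycleM (esym (ct x Gx)) cop) mulG_subl.
  have sy : <[y]>%G \subset <[y * t]>%G.
    by rewrite /= (cycleM (esym (ct y Gy)) cop') mulG_subl.
  have := eq_subG_cyclic cyc sx sy.
  by rewrite /= -/(order x) -/(order y) oxy eqxx -val_eqE /= => ->.
have oxt : #[x * t] = #[y * t].
  by rewrite (orderM (esym (ct x Gx)) cop) (orderM (esym (ct y Gy)) cop') oxy.
exists #[x * t]; split.
- by apply: order_dvdG; rewrite groupM.
- by rewrite (orderM (esym (ct x Gx)) cop) ot oddM andbF orbT.
- by apply: two oxt neq'; rewrite groupM.
Qed.
End Grp.

Section Main.
Local Open Scope ring_scope.

Lemma main_lemma (gT : finGroupType) (G : {group gT}) :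
  (ndivisors #|G| <= ncyclic_subgroups G)%N /\
  (ncyclic_subgroups G = ndivisors #|G| <-> cyclic G).
Proof.
have n0 := cardG_gt0 G.
set n := #|G|.
pose a d : rat := (cnt G d)%:R.
have csum : #|CS G| = (\sum_(d <- divisors n) cnt G d)%N.
  have := sum_cnt G (fun _ => 1%N) (divisors_uniq n).
  rewrite (eq_bigr (fun d => cnt G d)) => [->|d _]; last by rewrite muln1.
  rewrite -sum1_card; apply: eq_bigr => H; rewrite inE => /andP[sHG _].
  by rewrite -dvdn_divisors // cardSg.
have HT : Td a n = (ncyclic_subgroups G)%:R.
  by rewrite /Td /a -natr_sum /ncyclic_subgroups -/(CS G) csum.
have HS e : (e %| n)%N -> Sd a e = (#|('Ldiv_e(G))%g|)%:R.
  move=> de; have e0 := dvdn_gt0 n0 de.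
  rewrite /Sd /a (eq_bigr (fun d => (cnt G d * totient d)%:R)) => [|d _]; last by rewrite natrM.
  rewrite -natr_sum sum_cnt ?divisors_uniq // LdivE; congr (_%:R); apply: eq_bigr => H _.
  by rewrite -dvdn_divisors.
have Ha e : (e %| n)%N -> e%:R <= Sd a e.
  move=> de; rewrite HS // ler_nat; apply: dvdn_leq; last exact: Frobenius_Ldiv.
  by apply/card_gt0P; exists 1%g; rewrite !inE group1 /=; apply/eqP; apply: expg1n.
have [Hle Hlt] := key n0 Ha.
split; first by rewrite -(ler_nat rat) -HT.
split.
  move=> Ec; apply: order_inj_cyclic => x y Gx Gy oxy.
  case: (eqVneq <[x]>%g <[y]>%g) => // neq; exfalso.
  have [e [de adm lt]] := witness Gx Gy oxy neq.
  have := Hlt e de adm; rewrite HS // ltr_nat => /(_ lt).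
  by rewrite HT ltr_nat /ndivisors Ec ltnn.
move=> cG; have [g Eg] := cyclicP cG.
rewrite /ncyclic_subgroups -/(CS G) csum /ndivisors -sum1_size big_seq [RHS]big_seq.
apply: eq_bigr => d; rewrite -dvdn_divisors // => dn.
have dg : (d %| #[g]%g)%N by rewrite /order -Eg.
rewrite /cnt (_ : [set H in CS G | #|H| == d] = [set <[g ^+ (#[g]%g %/ d)]>%G]) ?cards1 //.
rewrite -(cycle_sub_group dg); apply/setP => H; rewrite !inE Eg.
by case: (boolP (H \subset <[g]>%g)) => //= sH; rewrite (cyclicS sH) ?cycle_cyclic.
Qed.
End Main.

Theorem theorem1p2 (gT : finGroupType) (G : {group gT}) :
  ndivisors #|G| <= ncyclic_subgroups G /\
  (ncyclic_subgroups G = ndivisors #|G| <-> cyclic G).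
Proof. exact: main_lemma. Qed.
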